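(* Let $[L_1],[L_2],[L_3]\in\mathfrak B_3^0$ be distinct, and suppose the lines between $[L_1]$ and $[L_2]$ and between $[L_1]$ and $[L_3]$ are both unbent. Then either the three classes lie in a single apartment, or there exist a basis $e_1,e_2,e_3$ of $L_1$ and integers $t,s,u$ with $0<t<s$ and $t<u$ such that, after possibly exchanging $[L_2]$ and $[L_3]$, the classes $[L_2],[L_3]$ have representatives of one of the following forms: (i) $L_2=R\{e_1,\pi^se_2,\pi^se_3\}$ and $L_3=R\{e_1+\pi^te_2,\pi^ue_2,\pi^ue_3\}$; (ii) $L_2=R\{e_1,\pi^se_2,\pi^se_3\}$ and $L_3=R\{e_1+\pi^te_3,e_2,\pi^ue_3\}$; (iii) $L_2=R\{e_1,e_2,\pi^se_3\}$ and $L_3=R\{e_1+\pi^te_3,e_2,\pi^ue_3\}$. Here $R\{f_1,f_2,f_3\}$ denotes the $R$-span of $f_1,f_2,f_3$.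
   Context: Let $K$ be a field with a discrete valuation $v\colon K^*\to\mathbb Z$, valuation ring $R$, residue field $k$ and uniformizer $\pi$. Let $V$ be a $3$-dimensional $K$-vector space. A lattice is an $R$-submodule of $V$ free of rank $3$; $\mathfrak B_3^0$ is the set of homothety classes $[L]=\{\alpha L:\alpha\in K^*\}$ of lattices. A set of classes lies in a single apartment if there is a basis $f_1,f_2,f_3$ of $V$ such that every class in the set is represented by a lattice $\pi^{m_1}Rf_1+\pi^{m_2}Rf_2+\pi^{m_3}Rf_3$ with $m_i\in\mathbb Z$. For distinct $[L],[M]\in\mathfrak B_3^0$ choose (by the elementary divisor theorem) a basis $e_1,e_2,e_3$ of $V$ and integers $m_1\le m_2\le m_3$ with $L=Re_1+Re_2+Re_3$, $M=\pi^{m_1}Re_1+\pi^{m_2}Re_2+\pi^{m_3}Re_3$; the line between $[L]$ and $[M]$ is bent if $m_1<m_2<m_3$ and unbent otherwise. *)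

(* Defs.v *)
From HB Require Import structures.
From mathcomp Require Import all_boot all_order all_algebra.
Set Implicit Arguments. Unset Strict Implicit. Unset Printing Implicit Defensive.
Import Order.TTheory GRing.Theory Num.Theory.
Local Open Scope ring_scope.

(* A discrete valuation v : K^* -> Z (values on 0 are irrelevant junk). *)
Definition discrete_valuation (K : fieldType) (v : K -> int) : Prop :=
  (forall x y : K, x != 0 -> y != 0 -> v (x * y) = v x + v y) /\
  (forall x y : K, x != 0 -> y != 0 -> x + y != 0 ->
      Num.min (v x) (v y) <= v (x + y)) /\
  (exists x : K, x != 0 /\ v x = 1).

Definition inR (K : fieldType) (v : K -> int) (x : K) : Prop :=
  x = 0 \/ 0 <= v x.

Definition vec (K : fieldType) := 'rV[K]_3.

Definition span3 (K : fieldType) (v : K -> int) (f1 f2 f3 : vec K) : vec K -> Prop :=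
  fun x => exists a b c : K, inR v a /\ inR v b /\ inR v c /\
                             x = a *: f1 + b *: f2 + c *: f3.

Definition basis3 (K : fieldType) (f1 f2 f3 : vec K) : Prop :=
  forall a b c : K, a *: f1 + b *: f2 + c *: f3 = 0 -> a = 0 /\ b = 0 /\ c = 0.

Definition same_set (K : fieldType) (L M : vec K -> Prop) : Prop :=
  forall x, L x <-> M x.

(* A lattice: an R-submodule of V free of rank 3, i.e. the R-span of
   R-(equivalently K-)linearly independent f1,f2,f3. *)
Definition is_lattice (K : fieldType) (v : K -> int) (L : vec K -> Prop) : Prop :=
  exists f1 f2 f3 : vec K, basis3 f1 f2 f3 /\ same_set L (span3 v f1 f2 f3).

Definition homothetic (K : fieldType) (L M : vec K -> Prop) : Prop :=
  exists alpha : K, alpha != 0 /\ forall x, L x <-> M (alpha^-1 *: x).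

(* The line between [L] and [M] is unbent: in an elementary divisor
   presentation L = R{e1,e2,e3}, M = R{pi^m1 e1, pi^m2 e2, pi^m3 e3} with
   m1 <= m2 <= m3, one does not have m1 < m2 < m3.  (The m_i are unique
   up to a common shift, so this does not depend on the choice.) *)
Definition unbent (K : fieldType) (v : K -> int) (pi : K) (L M : vec K -> Prop) : Prop :=
  exists (e1 e2 e3 : vec K) (m1 m2 m3 : int),
    basis3 e1 e2 e3 /\ m1 <= m2 /\ m2 <= m3 /\
    same_set L (span3 v e1 e2 e3) /\
    same_set M (span3 v (pi ^ m1 *: e1) (pi ^ m2 *: e2) (pi ^ m3 *: e3)) /\
    ~ (m1 < m2 /\ m2 < m3).

Definition same_apartment (K : fieldType) (v : K -> int) (pi : K)
  (L1 L2 L3 : vec K -> Prop) : Prop :=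
  exists f1 f2 f3 : vec K, basis3 f1 f2 f3 /\
    forall L, (L = L1 \/ L = L2 \/ L = L3) ->
      exists m1 m2 m3 : int,
        homothetic L (span3 v (pi ^ m1 *: f1) (pi ^ m2 *: f2) (pi ^ m3 *: f3)).

Definition special_forms (K : fieldType) (v : K -> int) (pi : K)
  (e1 e2 e3 : vec K) (t s u : int) (M2 M3 : vec K -> Prop) : Prop :=
  (homothetic M2 (span3 v e1 (pi ^ s *: e2) (pi ^ s *: e3)) /\
   homothetic M3 (span3 v (e1 + pi ^ t *: e2) (pi ^ u *: e2) (pi ^ u *: e3)))
  \/
  (homothetic M2 (span3 v e1 (pi ^ s *: e2) (pi ^ s *: e3)) /\
   homothetic M3 (span3 v (e1 + pi ^ t *: e3) e2 (pi ^ u *: e3)))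
  \/
  (homothetic M2 (span3 v e1 e2 (pi ^ s *: e3)) /\
   homothetic M3 (span3 v (e1 + pi ^ t *: e3) e2 (pi ^ u *: e3))).

(* Main.v *)
Require Import Defs.
From HB Require Import structures.
From mathcomp Require Import all_boot all_order all_algebra.
From Stdlib Require Import Ring Field.
Import Order.TTheory GRing.Theory Num.Theory.
Local Open Scope ring_scope.

Section Basics.
Local Set Implicit Arguments.
Local Unset Strict Implicit.
Variable K : fieldType.

Definition Kadd (x y : K) : K := x + y.
Definition Kmul (x y : K) : K := x * y.
Definition Kopp (x : K) : K := - x.
Definition Ksub (x y : K) : K := x - y.
Definition Kdiv (x y : K) : K := x / y.
Definition Kinv (x : K) : K := x^-1.
Definition K0 : K := 0.
Definition K1 : K := 1.
Lemma Kring : @ring_theory K K0 K1 Kadd Kmul Ksub Kopp (@eq K).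
Proof. rewrite /K0 /K1 /Kadd /Kmul /Ksub /Kopp. split; intros; rewrite ?add0r ?mul1r ?mulrA ?addrA //; try by rewrite addrC.
  by rewrite mulrC. by rewrite mulrDl. by rewrite subrr. Qed.
Lemma Kfield : @field_theory K K0 K1 Kadd Kmul Ksub Kopp Kdiv Kinv (@eq K).
Proof. split. exact Kring. rewrite /K0 /K1. by apply/eqP; rewrite oner_eq0. by []. rewrite /K0 /K1 /Kmul /Kinv. move=> p /eqP Hp; by rewrite mulVf. Qed.
Add Field Kf : Kfield.
Ltac kfold := match goal with |- @eq _ ?x ?y => change (@eq K x y) end;
  rewrite -?[_ / _]/(Kdiv _ _) -?[_^-1]/(Kinv _) -?[_ - _]/(Ksub _ _) -?[_ + _]/(Kadd _ _) -?[_ * _]/(Kmul _ _) -?[- _]/(Kopp _) -?[0]/K0 -?[1]/K1.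
Ltac kring := kfold; ring.

Variable v : K -> int.
Variable pi : K.
Hypothesis hv : discrete_valuation v.
Hypothesis hpi : v pi = 1.

Lemma vM x y : x != 0 -> y != 0 -> v (x * y) = v x + v y.
Proof. by case: hv => H _; apply: H. Qed.

Lemma vD x y : x != 0 -> y != 0 -> x + y != 0 -> Num.min (v x) (v y) <= v (x + y).
Proof. by case: hv => _ [H _]; apply: H. Qed.

Lemma v1 : v 1 = 0.
Proof. have := @vM 1 1 (oner_neq0 K) (oner_neq0 K). rewrite mulr1 => H.
have : v 1 + v 1 = v 1 + 0 by rewrite addr0 -H. by move/addrI. Qed.

Lemma vV x : x != 0 -> v x^-1 = - v x.
Proof. move=> x0. have := @vM _ _ x0 (invr_neq0 x0). rewrite mulfV // v1 => H.
by apply/eqP; rewrite -addr_eq0 addrC -H. Qed.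

Lemma vN1 : v (-1) = 0.
Proof. have n1 : (-1 : K) != 0 by rewrite oppr_eq0 oner_neq0.
have := @vM _ _ n1 n1. rewrite mulrNN mulr1 v1 => H.
by move: H => /esym/eqP; rewrite -mulr2n mulrn_eq0 => /eqP. Qed.

Lemma vN x : x != 0 -> v (- x) = v x.
Proof. move=> x0. have n1 : (-1 : K) != 0 by rewrite oppr_eq0 oner_neq0.
by rewrite -mulN1r vM // vN1 add0r. Qed.

Hypothesis pi0 : pi != 0.

Lemma vpiX (n : int) : v (pi ^ n) = n.
Proof.
have vn : forall k : nat, v (pi ^+ k) = k%:Z.
  elim=> [|k IH]; first by rewrite expr0 v1.
  by rewrite exprS vM ?expf_neq0 // IH hpi intS.
case: n => k; first exact: vn.
by rewrite /exprz vV ?expf_neq0 // vn NegzE.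
Qed.

Definition unitR (c : K) := c != 0 /\ v c = 0.
Notation R := (inR v).

Lemma inR0 : R 0. Proof. by left. Qed.
Lemma inR1 : R 1. Proof. by right; rewrite v1. Qed.
Lemma inRM x y : R x -> R y -> R (x * y).
Proof. move=> [->|hx]; first by rewrite mul0r; left.
move=> [->|hy]; first by rewrite mulr0; left.
case: (eqVneq x 0) => [->|x0]; first by rewrite mul0r; left.
case: (eqVneq y 0) => [->|y0]; first by rewrite mulr0; left.
by right; rewrite vM // addr_ge0. Qed.
Lemma inRD x y : R x -> R y -> R (x + y).
Proof. move=> [->|hx]; first by rewrite add0r.
move=> [->|hy]; first by rewrite addr0; right.
case: (eqVneq x 0) => [->|x0]; first by rewrite add0r; right.
case: (eqVneq y 0) => [->|y0]; first by rewrite addr0; right.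
case: (eqVneq (x + y) 0) => [->|xy0]; first by left.
right; apply: (le_trans _ (vD x0 y0 xy0)). by rewrite le_min hx hy. Qed.
Lemma inRN x : R x -> R (- x).
Proof. move=> [->|hx]; first by rewrite oppr0; left.
case: (eqVneq x 0) => [->|x0]; first by rewrite oppr0; left.
by right; rewrite vN. Qed.
Lemma inRB x y : R x -> R y -> R (x - y).
Proof. by move=> hx hy; apply: inRD => //; apply: inRN. Qed.
Lemma inRpi (n : int) : 0 <= n -> R (pi ^ n).
Proof. by move=> hn; right; rewrite vpiX. Qed.
Lemma unitR_R c : unitR c -> R c.
Proof. by case=> _ h; right; rewrite h. Qed.
Lemma unitRV c : unitR c -> unitR c^-1.
Proof. case=> c0 h; split; first by rewrite invr_neq0.
by rewrite vV // h oppr0. Qed.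
Lemma inRV c : unitR c -> R c^-1.
Proof. by move/unitRV/unitR_R. Qed.
Lemma unitRM x y : unitR x -> unitR y -> unitR (x * y).
Proof. case=> x0 hx [y0 hy]; split; first by rewrite mulf_neq0.
by rewrite vM // hx hy addr0. Qed.
Lemma unitR1 : unitR 1. Proof. by split; [exact: oner_neq0|exact: v1]. Qed.
Lemma unitRN x : unitR x -> unitR (- x).
Proof. case=> x0 hx; split; first by rewrite oppr_eq0. by rewrite vN. Qed.

Lemma pi_factor (c : K) (t : int) : (c = 0 \/ t <= v c) ->
  exists c', R c' /\ c = pi ^ t * c'.
Proof.
move=> h; exists (pi ^ (- t) * c); split; last first.
  by rewrite mulrA -expfzDr // subrr expr0z mul1r.
case: h => [->|h]; first by rewrite mulr0; left.
case: (eqVneq c 0) => [->|c0]; first by rewrite mulr0; left.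
right; rewrite vM ?expfz_neq0 // vpiX. by rewrite addrC subr_ge0. Qed.

Lemma nonunit_pi c : R c -> ~ unitR c -> exists c', R c' /\ c = pi * c'.
Proof.
move=> hc hn. have hc1 : c = 0 \/ 1 <= v c.
  case: hc => [->|hc]; first by left.
  case: (eqVneq c 0) => [->|c0]; first by left.
  right. case: (ltrgt0P (v c)) => [hp|hn'|h0].
  - by rewrite -gtz0_ge1.
  - by move: hc; rewrite leNgt hn'.
  - by exfalso; apply: hn.
have [c' [h1 h2]] := @pi_factor c 1 hc1.
by exists c'; rewrite h2 expr1z.
Qed.

Lemma val_factor c : c != 0 -> exists g, unitR g /\ c = pi ^ (v c) * g.
Proof.
move=> c0; exists (pi ^ (- v c) * c); split; last first.
  by rewrite mulrA -expfzDr // subrr expr0z mul1r.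
split; first by rewrite mulf_neq0 ?expfz_neq0.
by rewrite vM ?expfz_neq0 // vpiX addNr. Qed.

Lemma pi_nonunit (t : int) c : 0 < t -> R c -> ~ unitR (pi ^ t * c).
Proof.
move=> ht hc [h0 h1]. have c0 : c != 0 by apply: contraNneq h0 => ->; rewrite mulr0.
move: h1; rewrite vM ?expfz_neq0 // vpiX. case: hc => [c00|hc]; first by rewrite c00 eqxx in c0.
move=> h; have : 0 < t + v c by apply: ltr_wpDr. by rewrite h. Qed.

Lemma common_factor c2 c3 : R c2 -> R c3 -> (c2 != 0 \/ c3 != 0) ->
  exists t : int, 0 <= t /\ exists c2' c3', R c2' /\ R c3' /\
    c2 = pi ^ t * c2' /\ c3 = pi ^ t * c3' /\ (unitR c2' \/ unitR c3').
Proof.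
move=> h2 h3 hn.
have key : forall a b, R a -> R b -> a != 0 -> (b = 0 \/ v a <= v b) ->
  exists t : int, 0 <= t /\ exists a' b', R a' /\ R b' /\
    a = pi ^ t * a' /\ b = pi ^ t * b' /\ unitR a'.
  move=> a b ha hb a0 hab. exists (v a); split.
    by case: ha => // ha; rewrite ha eqxx in a0.
  have [g [gu ga]] := val_factor a0.
  have [b' [hb' eb]] := @pi_factor b (v a) hab.
  by exists g, b'; split; [apply: unitR_R|].
case: (eqVneq c2 0) => [c20|c20]; case: (eqVneq c3 0) => [c30|c30].
- by case: hn; rewrite ?c20 ?c30 eqxx.
- have [t [ht [a' [b' [ha' [hb' [ea [eb ua]]]]]]]] := key c3 c2 h3 h2 c30 (or_introl c20).
  by exists t; split => //; exists b', a'; do 4 split => //; right.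
- have [t [ht [a' [b' [ha' [hb' [ea [eb ua]]]]]]]] := key c2 c3 h2 h3 c20 (or_introl c30).
  by exists t; split => //; exists a', b'; do 4 split => //; left.
- case: (lerP (v c2) (v c3)) => hle.
  + have [t [ht [a' [b' [ha' [hb' [ea [eb ua]]]]]]]] := key c2 c3 h2 h3 c20 (or_intror hle).
    by exists t; split => //; exists a', b'; do 4 split => //; left.
  + have [t [ht [a' [b' [ha' [hb' [ea [eb ua]]]]]]]] := key c3 c2 h3 h2 c30 (or_intror (ltW hle)).
    by exists t; split => //; exists b', a'; do 4 split => //; right.
Qed.

Notation V := (vec K).
Ltac atomize := repeat match goal with
  | |- context [@fun_of_matrix _ _ _ ?f ?i ?j] =>
  let x := fresh "x" in set x : K := (@fun_of_matrix _ _ _ f i j); clearbody x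
  | |- context [@exprz _ ?a ?n] =>
  let x := fresh "p" in set x : K := (@exprz _ a n); clearbody x end.
Ltac vring := apply/rowP => j; rewrite !mxE; atomize; kring.
Ltac vfield := apply/rowP => j; rewrite !mxE; atomize; kfold; field.

Definition Rmod (S : V -> Prop) :=
  S 0 /\ (forall x y, S x -> S y -> S (x + y)) /\ (forall r x, R r -> S x -> S (r *: x)).

Lemma Rmod_lc S x y z a b c : Rmod S -> S x -> S y -> S z -> R a -> R b -> R c ->
  S (a *: x + b *: y + c *: z).
Proof. move=> [h0 [hD hZ]] hx hy hz ha hb hc. exact: (hD _ _ (hD _ _ (hZ _ _ ha hx) (hZ _ _ hb hy)) (hZ _ _ hc hz)). Qed.

Lemma Rmod_ss S S' : same_set S S' -> Rmod S -> Rmod S'.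
Proof. move=> e [h0 [hD hZ]]; rewrite /Rmod; split; first by apply/e.
split; first by move=> x y /e hx /e hy; apply/e; apply: (hD).
by move=> r x hr /e hx; apply/e; apply: hZ. Qed.

Lemma span_intro f1 f2 f3 a b c w : R a -> R b -> R c -> w = a *: f1 + b *: f2 + c *: f3 ->
  span3 v f1 f2 f3 w.
Proof. by move=> ha hb hc ->; exists a, b, c. Qed.

Lemma Rmod_span f1 f2 f3 : Rmod (span3 v f1 f2 f3).
Proof. rewrite /Rmod; split; first by apply: (span_intro inR0 inR0 inR0); vring.
split.
  move=> x y [a [b [c [ha [hb [hc ->]]]]]] [a' [b' [c' [ha' [hb' [hc' ->]]]]]].
  apply: (span_intro (inRD ha ha') (inRD hb hb') (inRD hc hc')); vring.
move=> r x hr [a [b [c [ha [hb [hc ->]]]]]].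
apply: (span_intro (inRM hr ha) (inRM hr hb) (inRM hr hc)); vring. Qed.

Lemma span_g1 f1 f2 f3 : span3 v f1 f2 f3 f1.
Proof. apply: (span_intro inR1 inR0 inR0); vring. Qed.
Lemma span_g2 f1 f2 f3 : span3 v f1 f2 f3 f2.
Proof. apply: (span_intro inR0 inR1 inR0); vring. Qed.
Lemma span_g3 f1 f2 f3 : span3 v f1 f2 f3 f3.
Proof. apply: (span_intro inR0 inR0 inR1); vring. Qed.

Lemma span_incl S f1 f2 f3 : Rmod S -> S f1 -> S f2 -> S f3 ->
  forall w, span3 v f1 f2 f3 w -> S w.
Proof. move=> hS h1 h2 h3 w [a [b [c [ha [hb [hc ->]]]]]]. exact: Rmod_lc. Qed.

Lemma ss_refl (S : V -> Prop) : same_set S S. Proof. by []. Qed.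
Lemma ss_sym (S S' : V -> Prop) : same_set S S' -> same_set S' S.
Proof. by move=> e x; split => /e. Qed.
Lemma ss_trans (S S' S'' : V -> Prop) : same_set S S' -> same_set S' S'' -> same_set S S''.
Proof. by move=> e e' x; split => [/e/e'|/e'/e]. Qed.

Lemma ss_span f1 f2 f3 g1 g2 g3 :
  span3 v f1 f2 f3 g1 -> span3 v f1 f2 f3 g2 -> span3 v f1 f2 f3 g3 ->
  span3 v g1 g2 g3 f1 -> span3 v g1 g2 g3 f2 -> span3 v g1 g2 g3 f3 ->
  same_set (span3 v f1 f2 f3) (span3 v g1 g2 g3).
Proof. move=> h1 h2 h3 k1 k2 k3 x; split; apply: span_incl => //; exact: Rmod_span. Qed.

Lemma span12 x y z : same_set (span3 v x y z) (span3 v y x z).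
Proof. apply: ss_span; auto using span_g1, span_g2, span_g3. Qed.
Lemma span23 x y z : same_set (span3 v x y z) (span3 v x z y).
Proof. apply: ss_span; auto using span_g1, span_g2, span_g3. Qed.

Definition basisL (L : V -> Prop) f1 f2 f3 := basis3 f1 f2 f3 /\ same_set L (span3 v f1 f2 f3).

Lemma bL_Rmod L f1 f2 f3 : basisL L f1 f2 f3 -> Rmod L.
Proof. move=> [_ e]; apply: Rmod_ss (ss_sym e) _; exact: Rmod_span. Qed.

Lemma bL_in L f1 f2 f3 : basisL L f1 f2 f3 -> L f1 /\ L f2 /\ L f3.
Proof. move=> [_ e]; do 2 (split; first by apply/e; auto using span_g1, span_g2, span_g3).
  by apply/e; apply: span_g3. Qed.

Lemma bL_coord L f1 f2 f3 w : basisL L f1 f2 f3 -> L w ->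
  exists a b c, R a /\ R b /\ R c /\ w = a *: f1 + b *: f2 + c *: f3.
Proof. by move=> [_ e] /e. Qed.

Lemma bL12 L x y z : basisL L x y z -> basisL L y x z.
Proof. move=> [hb e]; split; last by apply: ss_trans e (span12 _ _ _).
move=> a b c h; have e' : b *: x + a *: y + c *: z = 0 by rewrite -h; vring.
by have [? [? ?]] := hb b a c e'. Qed.
Lemma bL23 L x y z : basisL L x y z -> basisL L x z y.
Proof. move=> [hb e]; split; last by apply: ss_trans e (span23 _ _ _).
move=> a b c h; have e' : a *: x + c *: y + b *: z = 0 by rewrite -h; vring.
by have [? [? ?]] := hb a c b e'. Qed.
Lemma bL_ss L L' x y z : same_set L L' -> basisL L x y z -> basisL L' x y z.
Proof. by move=> e [hb e']; split => //; apply: ss_trans (ss_sym e) e'. Qed.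

Lemma bL_exch1 L f1 f2 f3 c1 c2 c3 : basisL L f1 f2 f3 -> R c1 -> R c2 -> R c3 -> unitR c1 ->
  basisL L (c1 *: f1 + c2 *: f2 + c3 *: f3) f2 f3.
Proof.
move=> [hb e] h1 h2 h3 [u0 u1]; split.
  move=> a b c h.
  have e' : (a * c1) *: f1 + (a * c2 + b) *: f2 + (a * c3 + c) *: f3 = 0 by rewrite -h; vring.
  have [ha [hb' hc]] := hb _ _ _ e'.
  have a0 : a = 0 by move/eqP: ha; rewrite mulf_eq0 (negbTE u0) orbF => /eqP.
  by move: hb' hc; rewrite a0 !mul0r !add0r.
apply: ss_trans e _; apply: ss_span; auto using span_g1, span_g2, span_g3.
- apply: Rmod_lc; auto using Rmod_span, span_g1, span_g2, span_g3.
- set w := c1 *: f1 + c2 *: f2 + c3 *: f3.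
  have -> : f1 = c1^-1 *: w + (- (c1^-1 * c2)) *: f2 + (- (c1^-1 * c3)) *: f3.
    by rewrite /w; vfield; rewrite /K0; apply/eqP.
  have hi := inRV (conj u0 u1).
  by apply: Rmod_lc; auto using Rmod_span, span_g1, span_g2, span_g3, inRN, inRM.
Qed.

Lemma bL_exch2 L f1 f2 f3 c1 c2 c3 : basisL L f1 f2 f3 -> R c1 -> R c2 -> R c3 -> unitR c2 ->
  basisL L f1 (c1 *: f1 + c2 *: f2 + c3 *: f3) f3.
Proof. move=> /bL12 hb h1 h2 h3 u. have := bL_exch1 hb h2 h1 h3 u.
have -> : c2 *: f2 + c1 *: f1 + c3 *: f3 = c1 *: f1 + c2 *: f2 + c3 *: f3 by vring.
exact: bL12. Qed.

Lemma bL_exch3 L f1 f2 f3 c1 c2 c3 : basisL L f1 f2 f3 -> R c1 -> R c2 -> R c3 -> unitR c3 ->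
  basisL L f1 f2 (c1 *: f1 + c2 *: f2 + c3 *: f3).
Proof. move=> /bL23 hb h1 h2 h3 u. have := bL_exch2 hb h1 h3 h2 u.
have -> : c1 *: f1 + c3 *: f3 + c2 *: f2 = c1 *: f1 + c2 *: f2 + c3 *: f3 by vring.
exact: bL23. Qed.

Lemma unitR_dec c : unitR c \/ ~ unitR c.
Proof. case: (eqVneq c 0) => [->|c0]; first by right; case; rewrite eqxx.
case: (eqVneq (v c) 0) => [h|h]; [by left|by right; case=> _ /eqP; rewrite (negbTE h)]. Qed.

Lemma prim L f1 f2 f3 g1 g2 g3 c1 c2 c3 : basisL L f1 f2 f3 -> basisL L g1 g2 g3 ->
  R c1 -> R c2 -> R c3 -> g1 = c1 *: f1 + c2 *: f2 + c3 *: f3 ->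
  unitR c1 \/ unitR c2 \/ unitR c3.
Proof.
move=> hf [hg eg] h1 h2 h3 e.
case: (unitR_dec c1) => [|n1]; first by left.
case: (unitR_dec c2) => [|n2]; first by right; left.
case: (unitR_dec c3) => [|n3]; first by right; right.
exfalso.
have [d1 [k1 E1]] := nonunit_pi h1 n1.
have [d2 [k2 E2]] := nonunit_pi h2 n2.
have [d3 [k3 E3]] := nonunit_pi h3 n3.
rewrite E1 E2 E3 in e.
have hw : L (d1 *: f1 + d2 *: f2 + d3 *: f3).
  have [? [? ?]] := bL_in hf.
  by apply: Rmod_lc => //; exact: bL_Rmod hf.
have [x [y [z [hx [hy [hz ew]]]]]] := (eg _).1 hw.
have e0 : (1 - pi * x) *: g1 + (- (pi * y)) *: g2 + (- (pi * z)) *: g3 = 0.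
  have eg1 : g1 = pi *: (x *: g1 + y *: g2 + z *: g3) by rewrite -ew e; vring.
  have -> : (1 - pi * x) *: g1 + (- (pi * y)) *: g2 + (- (pi * z)) *: g3 =
    g1 - pi *: (x *: g1 + y *: g2 + z *: g3) by vring.
  by rewrite -eg1 subrr.
have [h _] := hg _ _ _ e0.
have x0 : x != 0 by apply: contra_eqN h => /eqP ->; rewrite mulr0 subr0 oner_eq0.
have : v (pi * x) = v 1 by move/eqP: h; rewrite subr_eq0 => /eqP <-.
rewrite v1 vM // hpi; case: hx => [hx|hx]; first by rewrite hx eqxx in x0.
move=> h'; have : 0 < 1 + v x by apply: ltr_pwDl.
by rewrite h'.
Qed.

Definition LineS (L : V -> Prop) x (k : int) (w : V) :=
  exists r l, R r /\ L l /\ w = r *: x + pi ^ k *: l.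
Definition PlaneS (L : V -> Prop) x y (k : int) (w : V) :=
  exists r r' l, R r /\ R r' /\ L l /\ w = r *: x + r' *: y + pi ^ k *: l.

Lemma LineS_Rmod L x k : Rmod L -> Rmod (LineS L x k).
Proof.
move=> [h0 [hD hZ]]; rewrite /Rmod; split.
  hnf; exists 0, 0; split; first exact: inR0. split => //; vring.
split.
  move=> w1 w2 [r [l [hr [hl ->]]]] [r' [l' [hr' [hl' ->]]]].
  hnf; exists (r + r'), (l + l'); split; first exact: inRD. split; first exact: (hD). vring.
move=> c w hc [r [l [hr [hl ->]]]].
hnf; exists (c * r), (c *: l); split; first exact: inRM. split; first exact: (hZ). vring. Qed.

Lemma PlaneS_Rmod L x y k : Rmod L -> Rmod (PlaneS L x y k).
Proof.
move=> [h0 [hD hZ]]; rewrite /Rmod; split.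
  hnf; exists 0, 0, 0; split; first exact: inR0. split; first exact: inR0. split => //; vring.
split.
  move=> w1 w2 [r [s [l [hr [hs [hl ->]]]]]] [r' [s' [l' [hr' [hs' [hl' ->]]]]]].
  hnf; exists (r + r'), (s + s'), (l + l'); split; first exact: inRD. split; first exact: inRD.
  split; first exact: (hD). vring.
move=> c w hc [r [s [l [hr [hs [hl ->]]]]]].
hnf; exists (c * r), (c * s), (c *: l); split; first exact: inRM. split; first exact: inRM.
split; first exact: (hZ). vring. Qed.

Lemma LineS_x L x k : Rmod L -> LineS L x k x.
Proof. move=> [h0 _]; hnf; exists 1, 0; split; first exact: inR1. split => //; vring. Qed.
Lemma LineS_l L x k l : L l -> LineS L x k (pi ^ k *: l).
Proof. move=> hl; hnf; exists 0, l; split; first exact: inR0. split => //; vring. Qed.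
Lemma PlaneS_x L x y k : Rmod L -> PlaneS L x y k x.
Proof. move=> [h0 _]; hnf; exists 1, 0, 0; split; first exact: inR1. split; first exact: inR0.
split => //; vring. Qed.
Lemma PlaneS_y L x y k : Rmod L -> PlaneS L x y k y.
Proof. move=> [h0 _]; hnf; exists 0, 1, 0; split; first exact: inR0. split; first exact: inR1.
split => //; vring. Qed.
Lemma PlaneS_l L x y k l : L l -> PlaneS L x y k (pi ^ k *: l).
Proof. move=> hl; hnf; exists 0, 0, l; split; first exact: inR0. split; first exact: inR0.
split => //; vring. Qed.

Lemma LineS_incl L x x' k : Rmod L -> LineS L x' k x ->
  forall w, LineS L x k w -> LineS L x' k w.
Proof.
move=> hL hx w [r [l [hr [hl ->]]]].
have hM := LineS_Rmod x' k hL. case: (hM) => _ [hD hZ].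
apply: (hD); [exact: (hZ) | exact: LineS_l]. Qed.

Lemma LineS_eq L x x' k : Rmod L -> LineS L x' k x -> LineS L x k x' ->
  same_set (LineS L x k) (LineS L x' k).
Proof. by move=> hL h1 h2 w; split; apply: LineS_incl. Qed.

Lemma PlaneS_incl L x y x' y' k : Rmod L -> PlaneS L x' y' k x -> PlaneS L x' y' k y ->
  forall w, PlaneS L x y k w -> PlaneS L x' y' k w.
Proof.
move=> hL hx hy w [r [s [l [hr [hs [hl ->]]]]]].
have hM := PlaneS_Rmod x' y' k hL. case: (hM) => _ [hD hZ].
apply: (hD); [apply: (hD); exact: (hZ) | exact: PlaneS_l]. Qed.

Lemma PlaneS_eq L x y x' y' k : Rmod L ->
  PlaneS L x' y' k x -> PlaneS L x' y' k y -> PlaneS L x y k x' -> PlaneS L x y k y' ->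
  same_set (PlaneS L x y k) (PlaneS L x' y' k).
Proof. by move=> hL h1 h2 h3 h4 w; split; apply: PlaneS_incl. Qed.

Lemma PlaneS_sym L x y k : Rmod L -> same_set (PlaneS L x y k) (PlaneS L y x k).
Proof. move=> hL; apply: PlaneS_eq; auto using PlaneS_x, PlaneS_y. Qed.

Lemma LineS_ss L L' x k : same_set L L' -> same_set (LineS L x k) (LineS L' x k).
Proof. move=> e w; split; move=> [r [l [hr [hl ->]]]]; hnf; exists r, l; do 2 split => //; by apply/e. Qed.
Lemma PlaneS_ss L L' x y k : same_set L L' -> same_set (PlaneS L x y k) (PlaneS L' x y k).
Proof. move=> e w; split; move=> [r [s [l [hr [hs [hl ->]]]]]]; hnf; exists r, s, l; do 3 split => //; by apply/e. Qed.

Lemma line_span L x y z k : basisL L x y z -> 0 <= k ->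
  same_set (span3 v x (pi ^ k *: y) (pi ^ k *: z)) (LineS L x k).
Proof.
move=> [hb e] hk w; split.
  move=> [a [b [c [ha [hb' [hc ->]]]]]].
  hnf; exists a, (b *: y + c *: z); split => //; split; last by vring.
  apply/e; apply: (span_intro inR0 hb' hc); vring.
move=> [r [l [hr [hl ->]]]]. have [a [b [c [ha [hb' [hc el]]]]]] := (e l).1 hl.
apply: (span_intro (inRD hr (inRM (inRpi hk) ha)) hb' hc); rewrite el; vring. Qed.

Lemma plane_span L x y z k : basisL L x y z -> 0 <= k ->
  same_set (span3 v x y (pi ^ k *: z)) (PlaneS L x y k).
Proof.
move=> [hb e] hk w; split.
  move=> [a [b [c [ha [hb' [hc ->]]]]]].
  hnf; exists a, b, (c *: z); do 2 split => //; split; last by vring.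
  apply/e; apply: (span_intro inR0 inR0 hc); vring.
move=> [r [s [l [hr [hs [hl ->]]]]]]. have [a [b [c [ha [hb' [hc el]]]]]] := (e l).1 hl.
apply: (span_intro (inRD hr (inRM (inRpi hk) ha)) (inRD hs (inRM (inRpi hk) hb')) hc).
rewrite el; vring. Qed.

Lemma pi_split (k t : int) : pi ^ t = pi ^ k * pi ^ (t - k).
Proof. by rewrite -expfzDr // addrC subrK. Qed.

Lemma LineS_unit L x c k : Rmod L -> unitR c -> same_set (LineS L x k) (LineS L (c *: x) k).
Proof.
move=> hL hc; have [h0 _] := hL; apply: LineS_eq => //.
- hnf; exists c^-1, 0; split; first exact: inRV. split => //.
  case: hc => c0 _; vfield; rewrite /K0; exact/eqP.
- hnf; exists c, 0; split; first exact: unitR_R. split => //; vring.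
Qed.

Lemma LineS_shift L x y k t : Rmod L -> L y -> 0 <= k -> k <= t ->
  same_set (LineS L x k) (LineS L (x + pi ^ t *: y) k).
Proof.
move=> hL hy hk hkt; have [h0 [hD hZ]] := hL.
have htk : 0 <= t - k by rewrite subr_ge0.
apply: LineS_eq => //.
- hnf; exists 1, ((- pi ^ (t - k)) *: y); split; first exact: inR1.
  split; first by apply: (hZ) => //; apply: inRN; apply: inRpi.
  rewrite (pi_split k t); vring.
- hnf; exists 1, (pi ^ (t - k) *: y); split; first exact: inR1.
  split; first by apply: (hZ) => //; apply: inRpi.
  rewrite (pi_split k t); vring.
Qed.

Lemma PlaneS_exch L x y k c1 c2 : Rmod L -> unitR c1 -> R c2 ->
  same_set (PlaneS L x y k) (PlaneS L (c1 *: x + c2 *: y) y k).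
Proof.
move=> hL hc h2; have [h0 _] := hL; apply: PlaneS_eq; auto using PlaneS_y.
- hnf; exists c1^-1, (- (c1^-1 * c2)), 0; split; first exact: inRV.
  split; first by apply: inRN; apply: inRM => //; apply: inRV.
  split => //. case: hc => c0 _; vfield; rewrite /K0; exact/eqP.
- hnf; exists c1, c2, 0; split; first exact: unitR_R. split => //. split => //; vring.
Qed.

Lemma PlaneS_shift L x y z k t : Rmod L -> L z -> 0 <= k -> k <= t ->
  same_set (PlaneS L x y k) (PlaneS L (x + pi ^ t *: z) y k).
Proof.
move=> hL hz hk hkt; have [h0 [hD hZ]] := hL.
have htk : 0 <= t - k by rewrite subr_ge0.
apply: PlaneS_eq; auto using PlaneS_y.
- hnf; exists 1, 0, ((- pi ^ (t - k)) *: z); split; first exact: inR1.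
  split; first exact: inR0.
  split; first by apply: (hZ) => //; apply: inRN; apply: inRpi.
  rewrite (pi_split k t); vring.
- hnf; exists 1, 0, (pi ^ (t - k) *: z); split; first exact: inR1.
  split; first exact: inR0.
  split; first by apply: (hZ) => //; apply: inRpi.
  rewrite (pi_split k t); vring.
Qed.

Lemma ss_hom (M N : V -> Prop) : same_set M N -> homothetic M N.
Proof. move=> e; exists 1; split; first exact: oner_neq0.
by move=> x; rewrite invr1 scale1r. Qed.

Lemma hom_ss (M N N' : V -> Prop) : homothetic M N -> same_set N N' -> homothetic M N'.
Proof. move=> [a [a0 h]] e; exists a; split => // x; apply: iff_trans (h x) (e _). Qed.

Lemma hom_scale (M : V -> Prop) (a : K) f1 f2 f3 : a != 0 ->
  same_set M (span3 v (a *: f1) (a *: f2) (a *: f3)) -> homothetic M (span3 v f1 f2 f3).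
Proof.
move=> a0 e; exists a; split => // x; apply: iff_trans (e x) _; split.
  move=> [b [c [d [hb [hc [hd ->]]]]]]. apply: (span_intro hb hc hd).
  vfield; rewrite /K0; exact/eqP.
move=> [b [c [d [hb [hc [hd h]]]]]]. apply: (span_intro hb hc hd).
have -> : x = a *: (a^-1 *: x) by rewrite scalerA mulfV // scale1r.
rewrite h; vring. Qed.

Definition AptH f1 f2 f3 (M : V -> Prop) := exists m1 m2 m3 : int,
  homothetic M (span3 v (pi ^ m1 *: f1) (pi ^ m2 *: f2) (pi ^ m3 *: f3)).

Lemma apt_mk L1 L2 L3 f1 f2 f3 : basisL L1 f1 f2 f3 -> AptH f1 f2 f3 L2 -> AptH f1 f2 f3 L3 ->
  same_apartment v pi L1 L2 L3.
Proof.
move=> [hb e] h2 h3; exists f1, f2, f3; split => // L [->|[->|->]] //.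
by exists 0, 0, 0; rewrite expr0z !scale1r; apply: ss_hom. Qed.

Lemma apt_line1 L f1 f2 f3 M k : basisL L f1 f2 f3 -> 0 <= k -> homothetic M (LineS L f1 k) ->
  AptH f1 f2 f3 M.
Proof. move=> hb hk hM; exists 0, k, k; rewrite expr0z scale1r.
apply: hom_ss hM _; apply: ss_sym; exact: line_span. Qed.

Lemma apt_line2 L f1 f2 f3 M k : basisL L f1 f2 f3 -> 0 <= k -> homothetic M (LineS L f2 k) ->
  AptH f1 f2 f3 M.
Proof. move=> hb hk hM; exists k, 0, k; rewrite expr0z scale1r.
apply: hom_ss hM _; apply: ss_trans (ss_sym (line_span (bL12 hb) hk)) _; exact: span12. Qed.

Lemma apt_line3 L f1 f2 f3 M k : basisL L f1 f2 f3 -> 0 <= k -> homothetic M (LineS L f3 k) ->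
  AptH f1 f2 f3 M.
Proof. move=> hb hk hM; exists k, k, 0; rewrite expr0z scale1r.
apply: hom_ss hM _; apply: ss_trans (ss_sym (line_span (bL12 (bL23 (bL12 hb))) hk)) _.
apply: ss_trans (span12 _ _ _) _; apply: ss_trans (span23 _ _ _) _; exact: span12. Qed.

Lemma apt_plane12 L f1 f2 f3 M k : basisL L f1 f2 f3 -> 0 <= k -> homothetic M (PlaneS L f1 f2 k) ->
  AptH f1 f2 f3 M.
Proof. move=> hb hk hM; exists 0, 0, k; rewrite expr0z !scale1r.
apply: hom_ss hM _; apply: ss_sym; exact: plane_span. Qed.

Lemma apt_plane13 L f1 f2 f3 M k : basisL L f1 f2 f3 -> 0 <= k -> homothetic M (PlaneS L f1 f3 k) ->
  AptH f1 f2 f3 M.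
Proof. move=> hb hk hM; exists 0, k, 0; rewrite expr0z !scale1r.
apply: hom_ss hM _; apply: ss_trans (ss_sym (plane_span (bL23 hb) hk)) _; exact: span23. Qed.

Lemma apt_plane23 L f1 f2 f3 M k : basisL L f1 f2 f3 -> 0 <= k -> homothetic M (PlaneS L f2 f3 k) ->
  AptH f1 f2 f3 M.
Proof. move=> hb hk hM; exists k, 0, 0; rewrite expr0z !scale1r.
apply: hom_ss hM _; apply: ss_trans (ss_sym (plane_span (bL23 (bL12 hb)) hk)) _.
apply: ss_trans (span23 _ _ _) _; exact: span12. Qed.

Definition Concl (L1 L2 L3 : V -> Prop) :=
  same_apartment v pi L1 L2 L3 \/
  exists (e1 e2 e3 : vec K) (t s u : int),
    basis3 e1 e2 e3 /\ same_set L1 (span3 v e1 e2 e3) /\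
    0 < t /\ t < s /\ t < u /\
    (special_forms v pi e1 e2 e3 t s u L2 L3 \/
     special_forms v pi e1 e2 e3 t s u L3 L2).

Lemma Concl_sym L1 L2 L3 : Concl L1 L2 L3 -> Concl L1 L3 L2.
Proof.
case=> [[f1 [f2 [f3 [hb h]]]]|[e1 [e2 [e3 [t [s [u [h1 [h2 [h3 [h4 [h5 h6]]]]]]]]]]]].
  left; exists f1, f2, f3; split => // L hL; apply: h; tauto.
right; exists e1, e2, e3, t, s, u; do 5 split => //; tauto.
Qed.

Lemma bL_add2 L f1 f2 f3 (t : int) : basisL L f1 f2 f3 -> 0 <= t ->
  basisL L (f1 + pi ^ t *: f2) f2 f3.
Proof. move=> hb ht.
have -> : f1 + pi ^ t *: f2 = 1 *: f1 + pi ^ t *: f2 + 0 *: f3 by vring.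
exact: (bL_exch1 hb inR1 (inRpi ht) inR0 unitR1). Qed.

Lemma bL_add3 L f1 f2 f3 (t : int) : basisL L f1 f2 f3 -> 0 <= t ->
  basisL L (f1 + pi ^ t *: f3) f2 f3.
Proof. move=> hb ht.
have -> : f1 + pi ^ t *: f3 = 1 *: f1 + 0 *: f2 + pi ^ t *: f3 by vring.
exact: (bL_exch1 hb inR1 inR0 (inRpi ht) unitR1). Qed.

Lemma LL_final L1 L2 L3 e1 e2 e3 (t s u : int) : basisL L1 e1 e2 e3 ->
  0 < t -> 0 < s -> 0 < u ->
  homothetic L2 (LineS L1 e1 s) -> homothetic L3 (LineS L1 (e1 + pi ^ t *: e2) u) ->
  Concl L1 L2 L3.
Proof.
move=> hb ht hs hu h2 h3.
have hb' := bL_add2 hb (ltW ht).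
have hL := bL_Rmod hb. have [_ [he2 he3]] := bL_in hb.
case: (ltP t s) => hts; last first.
  left; apply: (apt_mk hb').
    apply: apt_line1 hb' (ltW hs) _; apply: hom_ss h2 _; exact: (LineS_shift _ hL he2 (ltW hs) hts).
  exact: apt_line1 hb' (ltW hu) h3.
case: (ltP t u) => htu; last first.
  left; apply: (apt_mk hb); first exact: apt_line1 hb (ltW hs) h2.
  apply: apt_line1 hb (ltW hu) _; apply: hom_ss h3 _; apply: ss_sym; exact: (LineS_shift _ hL he2 (ltW hu) htu).
right; exists e1, e2, e3, t, s, u; have [hb0 hb1] := hb.
do 5 split => //; left; left; split.
  apply: hom_ss h2 _; apply: ss_sym; exact: (line_span hb (ltW hs)).
apply: hom_ss h3 _; apply: ss_sym; exact: (line_span hb' (ltW hu)).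
Qed.

Lemma LP_final L1 L2 L3 e1 e2 e3 (t s u : int) : basisL L1 e1 e2 e3 ->
  0 < t -> 0 < s -> 0 < u ->
  homothetic L2 (LineS L1 e1 s) -> homothetic L3 (PlaneS L1 (e1 + pi ^ t *: e3) e2 u) ->
  Concl L1 L2 L3.
Proof.
move=> hb ht hs hu h2 h3.
have hb' := bL_add3 hb (ltW ht).
have hL := bL_Rmod hb. have [_ [he2 he3]] := bL_in hb.
case: (ltP t s) => hts; last first.
  left; apply: (apt_mk hb').
    apply: apt_line1 hb' (ltW hs) _; apply: hom_ss h2 _; exact: (LineS_shift _ hL he3 (ltW hs) hts).
  exact: apt_plane12 hb' (ltW hu) h3.
case: (ltP t u) => htu; last first.
  left; apply: (apt_mk hb); first exact: apt_line1 hb (ltW hs) h2.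
  apply: apt_plane12 hb (ltW hu) _; apply: hom_ss h3 _; apply: ss_sym; exact: (PlaneS_shift _ _ hL he3 (ltW hu) htu).
right; exists e1, e2, e3, t, s, u; have [hb0 hb1] := hb.
do 5 split => //; left; right; left; split.
  apply: hom_ss h2 _; apply: ss_sym; exact: (line_span hb (ltW hs)).
apply: hom_ss h3 _; apply: ss_sym; exact: (plane_span hb' (ltW hu)).
Qed.

Lemma PP_final L1 L2 L3 e1 e2 e3 (t s u : int) : basisL L1 e1 e2 e3 ->
  0 < t -> 0 < s -> 0 < u ->
  homothetic L2 (PlaneS L1 e1 e2 s) -> homothetic L3 (PlaneS L1 (e1 + pi ^ t *: e3) e2 u) ->
  Concl L1 L2 L3.
Proof.
move=> hb ht hs hu h2 h3.
have hb' := bL_add3 hb (ltW ht).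
have hL := bL_Rmod hb. have [_ [he2 he3]] := bL_in hb.
case: (ltP t s) => hts; last first.
  left; apply: (apt_mk hb').
    apply: apt_plane12 hb' (ltW hs) _; apply: hom_ss h2 _; exact: (PlaneS_shift _ _ hL he3 (ltW hs) hts).
  exact: apt_plane12 hb' (ltW hu) h3.
case: (ltP t u) => htu; last first.
  left; apply: (apt_mk hb); first exact: apt_plane12 hb (ltW hs) h2.
  apply: apt_plane12 hb (ltW hu) _; apply: hom_ss h3 _; apply: ss_sym; exact: (PlaneS_shift _ _ hL he3 (ltW hu) htu).
right; exists e1, e2, e3, t, s, u; have [hb0 hb1] := hb.
do 5 split => //; left; right; right; split.
  apply: hom_ss h2 _; apply: ss_sym; exact: (plane_span hb (ltW hs)).
apply: hom_ss h3 _; apply: ss_sym; exact: (plane_span hb' (ltW hu)).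
Qed.

Lemma pi_nonunit' (t : int) c c' : 0 < t -> R c' -> c = pi ^ t * c' -> ~ unitR c.
Proof. by move=> ht hc' ->; exact: pi_nonunit. Qed.

Lemma LL_case L1 L2 L3 a1 a2 a3 b1 b2 b3 (s u : int) :
  basisL L1 a1 a2 a3 -> basisL L1 b1 b2 b3 -> 0 < s -> 0 < u ->
  homothetic L2 (LineS L1 a1 s) -> homothetic L3 (LineS L1 b1 u) -> Concl L1 L2 L3.
Proof.
move=> ha hb hs hu h2 h3.
have hL := bL_Rmod ha.
have [c1 [c2 [c3 [k1 [k2 [k3 eb]]]]]] := bL_coord ha (bL_in hb).1.
have hp := prim ha hb k1 k2 k3 eb.
case: (eqVneq c2 0) => [c20|c20]; case: (eqVneq c3 0) => [c30|c30].
- have u1 : unitR c1.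
    case: hp => [//|[[]|[]]]; by rewrite ?c20 ?c30 eqxx.
  left; apply: (apt_mk ha); first exact: apt_line1 ha (ltW hs) h2.
  apply: apt_line1 ha (ltW hu) _; apply: hom_ss h3 _.
  have -> : b1 = c1 *: a1 by rewrite eb c20 c30; vring.
  apply: ss_sym; exact: LineS_unit.
all: have hn : c2 != 0 \/ c3 != 0 by (left + right).
all: have [t [ht [c2' [c3' [k2' [k3' [e2 [e3 hu']]]]]]]] := common_factor k2 k3 hn.
all: case: (ltgtP t 0) => [htn|htp|ht0]; first by rewrite ltNge ht in htn.
2,4,6: (move: e2 e3; rewrite ht0 expr0z !mul1r => e2 e3; subst c2' c3'; left;
  case: hu' => hu'; [
   have hb' := bL_exch2 ha k1 k2 k3 hu'; rewrite -eb in hb';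
   apply: (apt_mk hb'); [exact: apt_line1 hb' (ltW hs) h2 | exact: apt_line2 hb' (ltW hu) h3]
  | have hb' := bL_exch3 ha k1 k2 k3 hu'; rewrite -eb in hb';
   apply: (apt_mk hb'); [exact: apt_line1 hb' (ltW hs) h2 | exact: apt_line3 hb' (ltW hu) h3]]).
all: have u1 : unitR c1 by case: hp => [//|[/(pi_nonunit' htp k2' e2)|/(pi_nonunit' htp k3' e3)]].
all: have ci := inRV u1.
all: set w := (c1^-1 * c2') *: a2 + (c1^-1 * c3') *: a3.
all: have [e3v hbw] : exists e3v, basisL L1 a1 w e3v by
  case: hu' => hu'; [exists a3 | exists a2; apply: bL23];
  (have -> : w = 0 *: a1 + (c1^-1 * c2') *: a2 + (c1^-1 * c3') *: a3 by rewrite /w; vring);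
  [apply: bL_exch2 | apply: bL_exch3];
  try exact: inR0; try (apply: inRM => //); try (apply: unitRM => //; exact: unitRV).
all: have eb' : b1 = c1 *: (a1 + pi ^ t *: w) by
  rewrite eb e2 e3 /w; case: u1 => c10 _; vfield; rewrite /K0; exact/eqP.
all: apply: (LL_final hbw htp hs hu h2); apply: hom_ss h3 _; rewrite eb'.
all: apply: ss_sym; apply: LineS_unit => //.
Qed.

Lemma LP_core L1 L2 L3 a1 b1 b2 b3 c1 c2 c3 (s u : int) :
  basisL L1 b1 b2 b3 -> 0 < s -> 0 < u -> R c1 -> R c2 -> R c3 ->
  a1 = c1 *: b1 + c2 *: b2 + c3 *: b3 -> unitR c1 \/ unitR c3 ->
  homothetic L2 (LineS L1 a1 s) -> homothetic L3 (PlaneS L1 b1 b2 u) -> Concl L1 L2 L3.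
Proof.
move=> hb hs hu k1 k2 k3 ea hu13 h2 h3.
have hL := bL_Rmod hb.
case: (unitR_dec c3) => [u3|n3].
  have hb' := bL_exch3 hb k1 k2 k3 u3; rewrite -ea in hb'.
  left; apply: (apt_mk hb'); [exact: apt_line3 hb' (ltW hs) h2 | exact: apt_plane12 hb' (ltW hu) h3].
have u1 : unitR c1 by case: hu13.
have hp3 : homothetic L3 (PlaneS L1 (c1 *: b1 + c2 *: b2) b2 u).
  apply: hom_ss h3 _; exact: PlaneS_exch.
have hb1 := bL_exch1 hb k1 k2 k3 u1; rewrite -ea in hb1.
case: (eqVneq c3 0) => [c30|c30].
  have ep : c1 *: b1 + c2 *: b2 = a1 by rewrite ea c30; vring.
  rewrite ep in hp3.
  left; apply: (apt_mk hb1); [exact: apt_line1 hb1 (ltW hs) h2 | exact: apt_plane12 hb1 (ltW hu) hp3].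
have [g [ug eg]] := val_factor c30.
have ht : 0 < v c3.
  case: k3 => [c30'|hv3]; first by rewrite c30' eqxx in c30.
  rewrite lt_def hv3 andbT; apply/eqP => h; by apply: n3.
have hb2 : basisL L1 a1 b2 ((- g) *: b3).
  have -> : (- g) *: b3 = 0 *: a1 + 0 *: b2 + (- g) *: b3 by vring.
  apply: bL_exch3 => //; try exact: inR0; try (apply: inRN; exact: unitR_R); exact: unitRN.
apply: (LP_final hb2 ht hs hu h2).
move: (v c3) eg => t eg.
have -> : a1 + pi ^ t *: ((- g) *: b3) = c1 *: b1 + c2 *: b2 by rewrite ea eg; vring.
exact: hp3.
Qed.

Lemma LP_case L1 L2 L3 a1 a2 a3 b1 b2 b3 (s u : int) :
  basisL L1 a1 a2 a3 -> basisL L1 b1 b2 b3 -> 0 < s -> 0 < u ->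
  homothetic L2 (LineS L1 a1 s) -> homothetic L3 (PlaneS L1 b1 b2 u) -> Concl L1 L2 L3.
Proof.
move=> ha hb hs hu h2 h3.
have hL := bL_Rmod ha.
have [c1 [c2 [c3 [k1 [k2 [k3 ea]]]]]] := bL_coord hb (bL_in ha).1.
have hp := prim hb ha k1 k2 k3 ea.
case: hp => [u1|[u2|u3]].
- exact: (LP_core hb hs hu k1 k2 k3 ea (or_introl u1) h2 h3).
- have ea' : a1 = c2 *: b2 + c1 *: b1 + c3 *: b3 by rewrite ea; vring.
  apply: (LP_core (bL12 hb) hs hu k2 k1 k3 ea' (or_introl u2) h2).
  apply: hom_ss h3 _; exact: PlaneS_sym.
- exact: (LP_core hb hs hu k1 k2 k3 ea (or_intror u3) h2 h3).
Qed.

Lemma PP_core2 L1 L2 L3 a1 a2 a3 b1 b2 b3 c1 c2 c3 d1 d2 (s u : int) :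
  basisL L1 a1 a2 a3 -> basisL L1 b1 b2 b3 -> 0 < s -> 0 < u ->
  R c1 -> R c2 -> R c3 -> R d2 -> unitR d1 ->
  b1 = c1 *: a1 + c2 *: a2 + c3 *: a3 -> b2 = d1 *: a1 + d2 *: a2 + 0 *: a3 ->
  homothetic L2 (PlaneS L1 a1 a2 s) -> homothetic L3 (PlaneS L1 b1 b2 u) -> Concl L1 L2 L3.
Proof.
move=> ha hb hs hu k1 k2 k3 l2 ud1 eb1 eb2 h2 h3.
have hL := bL_Rmod ha.
have ha' := bL_exch1 ha (unitR_R ud1) l2 inR0 ud1; rewrite -eb2 in ha'.
have h2' : homothetic L2 (PlaneS L1 b2 a2 s).
  apply: hom_ss h2 _; have -> : b2 = d1 *: a1 + d2 *: a2 by rewrite eb2; vring.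
  exact: PlaneS_exch.
have id1 := inRV ud1.
set k := c1 / d1. set g2 := c2 - c1 * d2 / d1.
have kk : R k by apply: inRM.
have kg : R g2 by apply: inRB => //; apply: inRM => //; apply: inRM.
set b1'' := g2 *: a2 + c3 *: a3.
have d10 : d1 != 0 by case: ud1.
have e1'' : b1'' = 1 *: b1 + (- k) *: b2 by
  rewrite /b1'' /g2 /k eb1 eb2; vfield; rewrite /K0; exact/eqP.
have h3' : homothetic L3 (PlaneS L1 b1'' b2 u).
  apply: hom_ss h3 _; rewrite e1''; apply: PlaneS_exch => //; [exact: unitR1 | exact: inRN].
have hbb : basisL L1 b1'' b2 b3.
  have -> : b1'' = 1 *: b1 + (- k) *: b2 + 0 *: b3 by rewrite e1''; vring.
  apply: bL_exch1 => //; try exact: inR1; try exact: inR0; try exact: unitR1; exact: inRN.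
have e0 : b1'' = 0 *: b2 + g2 *: a2 + c3 *: a3 by rewrite /b1''; vring.
have hp := prim ha' hbb inR0 kg k3 e0.
case: (unitR_dec c3) => [u3|n3].
  have hb' := bL_exch3 ha' inR0 kg k3 u3; rewrite -e0 in hb'.
  left; apply: (apt_mk hb'); first exact: apt_plane12 hb' (ltW hs) h2'.
  apply: apt_plane13 hb' (ltW hu) _; apply: hom_ss h3' _; exact: PlaneS_sym.
have ug2 : unitR g2.
  case: hp => [[]|[//|//]]; by rewrite eqxx.
case: (eqVneq c3 0) => [c30|c30].
  have h3'' : homothetic L3 (PlaneS L1 b2 a2 u).
    apply: hom_ss h3' _.
    have -> : b1'' = g2 *: a2 + 0 *: b2 by rewrite /b1'' c30; vring.
    apply: ss_trans (ss_sym (PlaneS_exch _ _ _ hL ug2 inR0)) _; exact: PlaneS_sym.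
  left; apply: (apt_mk ha'); [exact: apt_plane12 ha' (ltW hs) h2' | exact: apt_plane12 ha' (ltW hu) h3''].
have [g [ug eg]] := val_factor c30.
have ht : 0 < v c3.
  case: k3 => [c30'|hv3]; first by rewrite c30' eqxx in c30.
  rewrite lt_def hv3 andbT; apply/eqP => h; by apply: n3.
move: (v c3) eg ht => t eg ht.
have ug' : unitR (g2^-1 * g) by apply: unitRM => //; exact: unitRV.
have hb2 : basisL L1 a2 b2 ((g2^-1 * g) *: a3).
  have -> : (g2^-1 * g) *: a3 = 0 *: a2 + 0 *: b2 + (g2^-1 * g) *: a3 by vring.
  apply: bL_exch3 (bL12 ha') inR0 inR0 (unitR_R ug') ug'.
apply: (PP_final hb2 ht hs hu).
  apply: hom_ss h2' _; exact: PlaneS_sym.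
apply: hom_ss h3' _.
have -> : a2 + pi ^ t *: ((g2^-1 * g) *: a3) = g2^-1 *: b1'' + 0 *: b2.
  rewrite /b1'' eg; case: ug2 => g20 _; vfield; rewrite /K0; exact/eqP.
apply: PlaneS_exch => //; [exact: unitRV | exact: inR0].
Qed.

Lemma PP_core L1 L2 L3 a1 a2 a3 b1 b2 b3 c1 c2 c3 d1 d2 (s u : int) :
  basisL L1 a1 a2 a3 -> basisL L1 b1 b2 b3 -> 0 < s -> 0 < u ->
  R c1 -> R c2 -> R c3 -> R d1 -> R d2 ->
  b1 = c1 *: a1 + c2 *: a2 + c3 *: a3 -> b2 = d1 *: a1 + d2 *: a2 + 0 *: a3 ->
  homothetic L2 (PlaneS L1 a1 a2 s) -> homothetic L3 (PlaneS L1 b1 b2 u) -> Concl L1 L2 L3.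
Proof.
move=> ha hb hs hu k1 k2 k3 l1 l2 eb1 eb2 h2 h3.
have hL := bL_Rmod ha.
have := prim ha (bL12 hb) l1 l2 inR0 eb2.
case=> [u1|[u2|[]]]; last by rewrite eqxx.
  exact: (PP_core2 ha hb hs hu k1 k2 k3 l2 u1 eb1 eb2 h2 h3).
apply: (PP_core2 (bL12 ha) hb hs hu k2 k1 k3 l1 u2 _ _ _ h3).
- by rewrite eb1; vring.
- by rewrite eb2; vring.
- apply: hom_ss h2 _; exact: PlaneS_sym.
Qed.

Lemma inR_div x y : x != 0 -> y != 0 -> v x <= v y -> R (y / x).
Proof. move=> x0 y0 h; right; by rewrite vM ?invr_neq0 // vV // subr_ge0. Qed.

Lemma PP_step L1 L2 L3 a1 a2 a3 b1 b2 b3 c1 c2 c3 d1 d2 d3 (s u : int) :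
  basisL L1 a1 a2 a3 -> basisL L1 b1 b2 b3 -> 0 < s -> 0 < u ->
  R c1 -> R c2 -> R c3 -> R d1 -> R d2 -> R d3 -> c3 != 0 -> d3 != 0 -> v c3 <= v d3 ->
  b1 = c1 *: a1 + c2 *: a2 + c3 *: a3 -> b2 = d1 *: a1 + d2 *: a2 + d3 *: a3 ->
  homothetic L2 (PlaneS L1 a1 a2 s) -> homothetic L3 (PlaneS L1 b1 b2 u) -> Concl L1 L2 L3.
Proof.
move=> ha hb hs hu k1 k2 k3 l1 l2 l3 c30 d30 hle eb1 eb2 h2 h3.
have hL := bL_Rmod ha.
have kr := inR_div c30 d30 hle.
set r := d3 / c3 in kr *.
set b2' := (d1 - r * c1) *: a1 + (d2 - r * c2) *: a2 + 0 *: a3.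
have e' : b2' = 1 *: b2 + (- r) *: b1.
  rewrite /b2' /r eb1 eb2; vfield; rewrite /K0; exact/eqP.
have hbb : basisL L1 b1 b2' b3.
  have -> : b2' = (- r) *: b1 + 1 *: b2 + 0 *: b3 by rewrite e'; vring.
  apply: bL_exch2 => //; try exact: inR1; try exact: inR0; try exact: unitR1; exact: inRN.
apply: (PP_core ha hbb hs hu k1 k2 k3 (inRB l1 (inRM kr k1)) (inRB l2 (inRM kr k2)) eb1 erefl h2).
apply: hom_ss h3 _; apply: ss_trans (PlaneS_sym _ _ _ hL) _.
rewrite e'; apply: ss_trans (PlaneS_exch _ _ _ hL unitR1 (inRN kr)) _.
exact: PlaneS_sym.
Qed.

Lemma PP_case L1 L2 L3 a1 a2 a3 b1 b2 b3 (s u : int) :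
  basisL L1 a1 a2 a3 -> basisL L1 b1 b2 b3 -> 0 < s -> 0 < u ->
  homothetic L2 (PlaneS L1 a1 a2 s) -> homothetic L3 (PlaneS L1 b1 b2 u) -> Concl L1 L2 L3.
Proof.
move=> ha hb hs hu h2 h3.
have hL := bL_Rmod ha.
have [c1 [c2 [c3 [k1 [k2 [k3 eb1]]]]]] := bL_coord ha (bL_in hb).1.
have [d1 [d2 [d3 [l1 [l2 [l3 eb2]]]]]] := bL_coord ha (bL_in hb).2.1.
have h3s : homothetic L3 (PlaneS L1 b2 b1 u) by apply: hom_ss h3 _; exact: PlaneS_sym.
case: (eqVneq d3 0) => [d30|d30].
  rewrite d30 in eb2; exact: (PP_core ha hb hs hu k1 k2 k3 l1 l2 eb1 eb2 h2 h3).
case: (eqVneq c3 0) => [c30|c30].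
  rewrite c30 in eb1; exact: (PP_core ha (bL12 hb) hs hu l1 l2 l3 k1 k2 eb2 eb1 h2 h3s).
case: (lerP (v c3) (v d3)) => hle.
  exact: (PP_step ha hb hs hu k1 k2 k3 l1 l2 l3 c30 d30 hle eb1 eb2 h2 h3).
exact: (PP_step ha (bL12 hb) hs hu l1 l2 l3 k1 k2 k3 d30 c30 (ltW hle) eb2 eb1 h2 h3s).
Qed.

Lemma hom_sym (M N : V -> Prop) : homothetic M N -> homothetic N M.
Proof. move=> [a [a0 h]]; exists a^-1; split; first by rewrite invr_neq0.
move=> y; rewrite invrK; apply: iff_sym; apply: iff_trans (h _) _.
by rewrite scalerA mulVf // scale1r. Qed.

Lemma hom_shift (M : V -> Prop) (m m1 m2 m3 : int) x y z :
  same_set M (span3 v (pi ^ m1 *: x) (pi ^ m2 *: y) (pi ^ m3 *: z)) ->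
  homothetic M (span3 v (pi ^ (m1 - m) *: x) (pi ^ (m2 - m) *: y) (pi ^ (m3 - m) *: z)).
Proof.
move=> e; apply: (hom_scale (a := pi ^ m)); first by rewrite expfz_neq0.
by rewrite !scalerA -!expfzDr // !(addrC m) !subrK. Qed.

Lemma classify L1 L2 : unbent v pi L1 L2 -> ~ homothetic L1 L2 ->
  exists a1 a2 a3 (s : int), basisL L1 a1 a2 a3 /\ 0 < s /\
    (homothetic L2 (LineS L1 a1 s) \/ homothetic L2 (PlaneS L1 a1 a2 s)).
Proof.
move=> [e1 [e2 [e3 [m1 [m2 [m3 [hb [h12 [h23 [eL1 [eL2 hns]]]]]]]]]]] hnh.
have hbL : basisL L1 e1 e2 e3 by [].
have hh := hom_shift m1 eL2. rewrite subrr expr0z scale1r in hh.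
exists e1, e2, e3.
case: (ltgtP m1 m2) => [lt12|lt21|eq12]; last 1 first.
- case: (ltgtP m2 m3) => [lt23|lt32|eq23]; last 1 first.
  + exfalso; apply: hnh; apply: hom_sym; apply: hom_ss hh _.
    rewrite -eq23 -eq12 subrr expr0z !scale1r; exact: ss_sym.
  + exists (m3 - m1); split => //; split; first by rewrite subr_gt0 eq12.
    right; apply: hom_ss hh _; rewrite -eq12 subrr expr0z scale1r.
    apply: plane_span => //; rewrite subr_ge0 eq12; exact: ltW.
  + by rewrite ltNge h23 in lt32.
- have eq23 : m2 = m3.
    case: (ltgtP m2 m3) => [lt23|lt32|//]; first by exfalso; exact: hns (conj lt12 lt23).
    by rewrite ltNge h23 in lt32.
  exists (m2 - m1); split => //; split; first by rewrite subr_gt0.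
  left; apply: hom_ss hh _; rewrite -eq23. apply: line_span => //; rewrite subr_ge0; exact: ltW.
- by rewrite ltNge h12 in lt21.
Qed.

Lemma rank2 f1 f2 f3 x y : basis3 f1 f2 f3 ->
  span3 v x y 0 f1 -> span3 v x y 0 f2 -> span3 v x y 0 f3 -> False.
Proof.
move=> hb [a1 [b1 [g1 [_ [_ [_ E1]]]]]] [a2 [b2 [g2 [_ [_ [_ E2]]]]]] [a3 [b3 [g3 [_ [_ [_ E3]]]]]].
have one0 : (1 : K) != 0 := oner_neq0 K.
case: (eqVneq a1 0) => [a10|a10].
  case: (eqVneq b1 0) => [b10|b10].
    have := hb 1 0 0; rewrite E1 a10 b10 => /(_ ltac:(vring)) [h _].
    by rewrite h eqxx in one0.
  have := hb (- (b2 / b1 * a3) + b3 / b1 * a2) a3 (- a2).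
  have e : (- (b2 / b1 * a3) + b3 / b1 * a2) *: f1 + a3 *: f2 + (- a2) *: f3 = 0.
    rewrite E1 E2 E3 a10; vfield; rewrite /K0; exact/eqP.
  move=> /(_ e) [_ [ha3 ha2]].
  have := hb (- (b2 / b1)) 1 0.
  have e' : (- (b2 / b1)) *: f1 + 1 *: f2 + 0 *: f3 = 0.
    rewrite E1 E2 a10; move/eqP: ha2; rewrite oppr_eq0 => /eqP ->.
    vfield; rewrite /K0; exact/eqP.
  move=> /(_ e') [_ [h _]]; by rewrite h eqxx in one0.
set b2' := b2 - a2 / a1 * b1. set b3' := b3 - a3 / a1 * b1.
have := hb (- (b3' * (a2 / a1)) + b2' * (a3 / a1)) b3' (- b2').
have e : (- (b3' * (a2 / a1)) + b2' * (a3 / a1)) *: f1 + b3' *: f2 + (- b2') *: f3 = 0.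
  rewrite E1 E2 E3 /b2' /b3'; vfield; rewrite /K0; exact/eqP.
move=> /(_ e) [_ [hb3 hb2]].
have := hb (- (a2 / a1)) 1 0.
have e' : (- (a2 / a1)) *: f1 + 1 *: f2 + 0 *: f3 = 0.
  have hb2' : b2' = 0 by move/eqP: hb2; rewrite oppr_eq0 => /eqP.
  move: hb2'; rewrite /b2' => /eqP; rewrite subr_eq0 => /eqP hb2'.
  rewrite E1 E2 hb2'; vfield; rewrite /K0; exact/eqP.
move=> /(_ e') [_ [h _]]; by rewrite h eqxx in one0.
Qed.

Lemma zero_gen (M : V -> Prop) x y z : is_lattice v M -> same_set M (span3 v x y z) ->
  x = 0 \/ y = 0 \/ z = 0 -> False.
Proof.
move=> [f1 [f2 [f3 [hb ef]]]] e hz.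
have key : forall p q, same_set M (span3 v p q 0) -> False.
  move=> p q e'; apply: (rank2 (x := p) (y := q) hb); apply/e'/ef;
    auto using span_g1, span_g2, span_g3.
move: e; case: hz => [->|[->|->]] e.
- apply: (key y z); apply: ss_trans e _; apply: ss_trans (span12 _ _ _) _; exact: span23.
- apply: (key x z); apply: ss_trans e _; exact: span23.
- exact: (key x y).
Qed.

Lemma pi_nz L1 L2 : unbent v pi L1 L2 -> ~ homothetic L1 L2 -> is_lattice v L2 -> pi != 0.
Proof.
move=> [e1 [e2 [e3 [m1 [m2 [m3 [hb [h12 [h23 [eL1 [eL2 hns]]]]]]]]]]] hnh hl.
apply/negP => /eqP p0. rewrite p0 in eL2.
have z : forall m : int, m != 0 -> forall w : V, (0 : K) ^ m *: w = 0.
  move=> m m0 w. have /eqP -> : (0 : K) ^ m == 0 by rewrite expfz_eq0 m0 eqxx.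
  exact: scale0r.
case: (eqVneq m1 0) => [m10|m10]; last by apply: (zero_gen hl eL2); left; apply: z.
case: (eqVneq m2 0) => [m20|m20]; last by apply: (zero_gen hl eL2); right; left; apply: z.
case: (eqVneq m3 0) => [m30|m30]; last by apply: (zero_gen hl eL2); right; right; apply: z.
apply: hnh; apply: ss_hom; apply: ss_trans eL1 _; apply: ss_sym.
by move: eL2; rewrite m10 m20 m30 expr0z !scale1r.
Qed.

End Basics.

Theorem mainTheorem18 (K : fieldType) (v : K -> int) (pi : K)
  (hv : discrete_valuation v) (hpi : v pi = 1)
  (L1 L2 L3 : vec K -> Prop)
  (hL1 : is_lattice v L1) (hL2 : is_lattice v L2) (hL3 : is_lattice v L3)
  (h12 : ~ homothetic L1 L2) (h13 : ~ homothetic L1 L3) (h23 : ~ homothetic L2 L3)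
  (u12 : unbent v pi L1 L2) (u13 : unbent v pi L1 L3) :
  same_apartment v pi L1 L2 L3 \/
  exists (e1 e2 e3 : vec K) (t s u : int),
    basis3 e1 e2 e3 /\ same_set L1 (span3 v e1 e2 e3) /\
    0 < t /\ t < s /\ t < u /\
    (special_forms v pi e1 e2 e3 t s u L2 L3 \/
     special_forms v pi e1 e2 e3 t s u L3 L2).
Proof.
have pi0 := pi_nz hv u12 h12 hL2.
have [a1 [a2 [a3 [s [ha [hs h2]]]]]] := classify hv hpi pi0 u12 h12.
have [b1 [b2 [b3 [u [hb [hu h3]]]]]] := classify hv hpi pi0 u13 h13.
case: h2 => h2; case: h3 => h3.
- exact: (LL_case hv hpi pi0 ha hb hs hu h2 h3).
- exact: (LP_case hv hpi pi0 ha hb hs hu h2 h3).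
- apply: Concl_sym; exact: (LP_case hv hpi pi0 hb ha hu hs h3 h2).
- exact: (PP_case hv hpi pi0 ha hb hs hu h2 h3).
Qed.
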